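(* Let $L>0$ be fixed and let the constant renormalized force $F=F(N)>0$ satisfy $F(N)=o(N)$ as $N\to\infty$. Then the fixed point satisfies $$\max_{1\le k\le N}\Big|(x_{k-1}-x_k)-\frac LN\Big|=o\Big(\frac1N\Big)\quad (N\to\infty),$$ so in particular the particle density exists and is the constant $1/L$ on $[-L,0]$.
   Context: A configuration consists of $N+1$ point particles $-L\le x_N<\dots<x_1<x_0\le 0$ on $[-L,0]$ with potential energy $U=\sum_{i=1}^{N}\frac{\alpha_{int}}{x_{i-1}-x_i}-\sum_{i=0}^{N}\int_{-L}^{x_i}\alpha_{ext}F_0\,dx$, $\alpha_{int},\alpha_{ext}>0$, with constant $F_0>0$; the renormalized force is the constant $F=\frac{\alpha_{ext}}{\alpha_{int}}F_0$, which may depend on $N$ (the external force pushes particles towards $0$). Write $\delta_k=x_{k-1}-x_k$, $f_k=\delta_k^{-2}$. The walls at $0,-L$ are completely inelastic. A fixed point is a configuration with $x_0=0$, $f_{k+1}+F=f_k$ for $k=1,\dots,N-1$, and either $x_N=-L$ with $f_N\ge F$, or $x_N>-L$ with $f_N=F$; it exists and is unique. The density $\rho$ of the fixed points (as $N\to\infty$) is a function on $[-L,0]$ such that for every subinterval $I\subset[-L,0]$, $\int_I\rho(x)\,dx=\lim_{N\to\infty}\frac{\#\{i:x_i\in I\}}{N}$. *)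

(* Defs.v *)
From Stdlib Require Import Reals Lra Lia List.
Import ListNotations.
Open Scope R_scope.

(* A configuration of N+1 particles is x : nat -> R, with x 0, ..., x N used. *)

Definition gap (x : nat -> R) (k : nat) : R := x (k - 1)%nat - x k.

Definition fk (x : nat -> R) (k : nat) : R := / (gap x k ^ 2).

Definition configuration (L : R) (N : nat) (x : nat -> R) : Prop :=
  (forall i : nat, (1 <= i <= N)%nat -> x i < x (i - 1)%nat) /\
  -L <= x N /\ x 0%nat <= 0.

Definition fixed_point (L F : R) (N : nat) (x : nat -> R) : Prop :=
  configuration L N x /\
  x 0%nat = 0 /\
  (forall k : nat, (1 <= k <= N - 1)%nat -> fk x (k + 1) + F = fk x k) /\
  ((x N = -L /\ fk x N >= F) \/ (x N > -L /\ fk x N = F)).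

Definition count_in (N : nat) (x : nat -> R) (a b : R) : nat :=
  length (filter (fun i => if Rle_dec a (x i) then
                             (if Rle_dec (x i) b then true else false)
                           else false) (seq 0 (N + 1))).

(* Main.v *)
Require Import Defs.
From Stdlib Require Import Reals Lra Lia List ZArith.
Open Scope R_scope.

Fixpoint ssum (g : nat -> R) (n : nat) : R :=
  match n with O => 0 | S m => ssum g m + g (S m) end.

Lemma ssum_gap x n : ssum (gap x) n = x 0%nat - x n.
Proof. induction n; simpl. lra. rewrite IHn. unfold gap. replace (S n - 1)%nat with n by lia. lra. Qed.

Lemma ssum_bounds g n lo hi : (forall k, (1 <= k <= n)%nat -> lo <= g k <= hi) ->
  INR n * lo <= ssum g n <= INR n * hi.
Proof. induction n; intros H. simpl; lra. cbn [ssum].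
  rewrite S_INR. assert (H1 := H (S n) ltac:(lia)).
  assert (IH := IHn (fun k Hk => H k ltac:(lia))). lra. Qed.

Lemma fk_formula L F N x : fixed_point L F N x -> (1 <= N)%nat ->
  forall j, (j <= N - 1)%nat -> fk x (N - j) = fk x N + INR j * F.
Proof. intros [_ [_ [Hrec _]]] HN. induction j; intros Hj.
 - rewrite Nat.sub_0_r. simpl. lra.
 - rewrite S_INR. specialize (Hrec (N - S j)%nat ltac:(lia)).
   replace (N - S j + 1)%nat with (N - j)%nat in Hrec by lia.
   rewrite IHj in Hrec by lia. lra.
Qed.

Lemma inv_sq_le a b d e : 0 < d -> 0 < e -> a * d^2 = 1 -> b * e^2 = 1 -> a <= b -> e <= d.
Proof. intros Hd He Ha Hb Hab.
  destruct (Rle_lt_dec e d) as [H|H]; auto.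
  assert (0 < a) by nra. assert (d^2 < e^2) by nra. nra. Qed.

Lemma main_bound L F N x : 0 < L -> 0 < F -> (1 <= N)%nat -> fixed_point L F N x ->
  2 * F * L^2 <= INR N ->
  forall k, (1 <= k <= N)%nat -> Rabs (INR N * gap x k - L) <= 2 * L^3 * F / INR N.
Proof.
  intros HL HF HN Hfp Hsmall.
  pose proof Hfp as [[Hdec [HxN Hx0]] [Hx00 [_ Hend]]].
  assert (Hform := fk_formula L F N x Hfp HN).
  set (c := fk x N) in *.
  assert (Hgpos : forall k, (1 <= k <= N)%nat -> 0 < gap x k).
  { intros k Hk. unfold gap. specialize (Hdec k Hk). lra. }
  assert (Hfg : forall k, (1 <= k <= N)%nat -> fk x k * (gap x k)^2 = 1).
  { intros k Hk. specialize (Hgpos k Hk). unfold fk. field. apply Rgt_not_eq; lra. }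
  assert (Hn : 1 <= INR N) by (apply (le_INR 1); lia).
  set (n := INR N) in *.
  assert (Hfk : forall k, (1 <= k <= N)%nat -> fk x k = c + INR (N - k) * F).
  { intros k Hk. rewrite <- (Hform (N - k)%nat) by lia. f_equal. lia. }
  assert (Hf1 : fk x 1 = c + (n - 1) * F).
  { rewrite Hfk by lia. rewrite minus_INR by lia. simpl INR. unfold n. lra. }
  set (u := gap x 1) in *. set (v := gap x N) in *.
  assert (Hu : 0 < u) by (apply Hgpos; lia).
  assert (Hv : 0 < v) by (apply Hgpos; lia).
  assert (Hcv : c * v^2 = 1) by (apply Hfg; lia).
  assert (Hfu : fk x 1 * u^2 = 1) by (apply Hfg; lia).
  assert (Hc : 0 < c) by nra.
  assert (Hk : forall k, (1 <= k <= N)%nat -> u <= gap x k <= v).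
  { intros k Hk. assert (Hr := Hfk k Hk).
    assert (0 <= INR (N - k)) by apply pos_INR.
    assert (INR (N - k) <= n - 1).
    { rewrite minus_INR by lia. assert (1 <= INR k) by (apply (le_INR 1); lia). unfold n; lra. }
    split.
    - apply (inv_sq_le (fk x k) (fk x 1) (gap x k) u); [apply Hgpos; auto | auto | apply Hfg; auto | auto | nra].
    - apply (inv_sq_le c (fk x k) v (gap x k)); [auto | apply Hgpos; auto | auto | apply Hfg; auto | nra]. }
  assert (HS := ssum_bounds (gap x) N u v Hk).
  rewrite ssum_gap, Hx00 in HS. fold n in HS.
  assert (Hf1L : fk x 1 * L^2 >= n^2).
  { assert (0 <= n * u) by nra. assert (n^2 * u^2 <= L^2) by nra.
    assert (0 < fk x 1) by nra. nra. }
  destruct Hend as [[HxNL _] | [_ HcF]].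
  2:{ exfalso. fold c in HcF. rewrite HcF in Hf1. 
      assert (F * L^2 >= n) by nra. nra. }
  rewrite HxNL in HS.
  assert (HcL : c * L^2 >= n^2 / 2).
  { assert (HFL : (n - 1) * (F * L^2) <= n * (n / 2)).
    { assert (0 < F * L^2) by (apply Rmult_lt_0_compat; [lra | apply pow_lt; lra]). apply Rle_trans with (n * (F * L^2)). nra. apply Rmult_le_compat_l; lra. }
    rewrite Hf1 in Hf1L. nra. }
  assert (Hv2 : v^2 <= 2 * L^2 / n^2).
  { apply Rmult_le_reg_r with (n^2 / 2). nra.
    replace (2 * L ^ 2 / n ^ 2 * (n ^ 2 / 2)) with (L^2) by (field; lra).
    apply Rle_trans with (v^2 * (c * L^2)). apply Rmult_le_compat_l. apply pow2_ge_0. lra.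
    right. replace (v ^ 2 * (c * L ^ 2)) with ((c * v^2) * L^2) by ring. rewrite Hcv. ring. }
  assert (Huv : u <= v) by (destruct (Hk 1%nat ltac:(lia)); lra).
  assert (E1 : n * (v - u) * u^2 <= L * (v^2 - u^2)).
  { assert (E0 : (n * u) * ((v - u) * u) <= L * ((v - u) * u)).
    { apply Rmult_le_compat_r. nra. lra. }
    assert (E0' : L * ((v - u) * u) <= L * (v^2 - u^2)).
    { apply Rmult_le_compat_l. lra. nra. }
    nra. }
  assert (E2 : v^2 - u^2 = u^2 * v^2 * (fk x 1 - c)).
  { replace (u ^ 2 * v ^ 2 * (fk x 1 - c)) with ((fk x 1 * u^2) * v^2 - (c * v^2) * u^2) by ring.
    rewrite Hfu, Hcv. ring. }
  assert (E3 : n * (v - u) <= L * v^2 * ((n - 1) * F)).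
  { apply Rmult_le_reg_r with (u^2). nra. rewrite E2, Hf1 in E1. nra. }
  assert (E4 : L * v^2 * ((n-1) * F) <= 2 * L^3 * F / n).
  { apply Rle_trans with (L * (2 * L^2 / n^2) * (n * F)).
    - assert (0 <= v^2) by nra. assert (0 <= (n-1)*F <= n * F) by nra.
      apply Rmult_le_compat; nra.
    - right. field. lra. }
  intros k Hkk. specialize (Hk k Hkk).
  assert (n * u <= n * gap x k <= n * v) by (split; apply Rmult_le_compat_l; lra).
  unfold Rabs; destruct Rcase_abs; lra.
Qed.

Lemma nat_above (r : R) : exists N : nat, r < INR N.
Proof.
  destruct (archimed r) as [H1 _].
  exists (Z.to_nat (up r)).
  destruct (ZArith_dec.Z_le_gt_dec 0 (up r)) as [H|H].
  - rewrite INR_IZR_INZ, Z2Nat.id by lia. lra.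
  - assert (IZR (up r) < 0) by (apply IZR_lt; lia). pose proof (pos_INR (Z.to_nat (up r))). lra.
Qed.

Lemma part1 L F x : 0 < L -> (forall N : nat, 0 < F N) ->
  Un_cv (fun N => F N / INR N) 0 ->
  (forall N : nat, (1 <= N)%nat -> fixed_point L (F N) N (x N)) ->
  forall eps : R, 0 < eps -> exists N0 : nat, forall N : nat, (N0 <= N)%nat ->
     forall k : nat, (1 <= k <= N)%nat ->
       INR N * Rabs (gap (x N) k - L / INR N) <= eps.
Proof.
  intros HL HF Hcv Hfp eps Heps.
  assert (HL2 : 0 < L^2) by (apply pow_lt; lra).
  assert (HL3 : 0 < L^3) by (apply pow_lt; lra).
  set (eta := Rmin (1 / (2 * L^2)) (eps / (2 * L^3))).
  assert (Heta : 0 < eta).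
  { unfold eta. apply Rmin_pos; apply Rdiv_lt_0_compat; lra. }
  destruct (Hcv eta Heta) as [N1 HN1].
  exists (Nat.max N1 1). intros N HN k Hk.
  assert (HN1' := HN1 N ltac:(lia)). unfold R_dist in HN1'.
  rewrite Rminus_0_r in HN1'.
  assert (Hn : 1 <= INR N) by (apply (le_INR 1); lia).
  set (n := INR N) in *.
  set (t := F N / n) in *.
  assert (HFt : F N = t * n) by (unfold t; field; lra).
  assert (Ht1 : t < 1 / (2 * L^2)).
  { apply Rlt_le_trans with eta. apply Rle_lt_trans with (Rabs t). apply RRle_abs. lra. apply Rmin_l. }
  assert (Ht2 : t < eps / (2 * L^3)).
  { apply Rlt_le_trans with eta. apply Rle_lt_trans with (Rabs t). apply RRle_abs. lra. apply Rmin_r. }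
  assert (Hsm : 2 * F N * L^2 <= n).
  { rewrite HFt. apply Rmult_lt_compat_r with (r := 2 * L^2) in Ht1; [|lra].
    replace (1 / (2 * L ^ 2) * (2 * L ^ 2)) with 1 in Ht1 by (field; lra). nra. }
  assert (HB := main_bound L (F N) N (x N) HL (HF N) ltac:(lia) (Hfp N ltac:(lia)) Hsm k Hk).
  fold n in HB.
  replace (n * Rabs (gap (x N) k - L / n)) with (Rabs (n * gap (x N) k - L)).
  - apply Rle_trans with (1 := HB). rewrite HFt.
    replace (2 * L ^ 3 * (t * n) / n) with (t * (2 * L^3)) by (field; lra).
    apply Rmult_lt_compat_r with (r := 2 * L^3) in Ht2; [|lra].
    replace (eps / (2 * L ^ 3) * (2 * L ^ 3)) with eps in Ht2 by (field; lra). lra.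
  - rewrite <- (Rabs_pos_eq n) at 2 by lra. rewrite <- Rabs_mult. f_equal. field. lra.
Qed.

Definition inI (p q : R) (i : nat) : bool :=
  if Rle_dec p (INR i) then if Rle_dec (INR i) q then true else false else false.

Lemma filter_len_mono (f g : nat -> bool) l :
  (forall i, In i l -> f i = true -> g i = true) ->
  (length (filter f l) <= length (filter g l))%nat.
Proof.
  induction l as [|a l IH]; intros H; simpl. lia.
  assert (IH' := IH (fun i Hi => H i (or_intror Hi))).
  destruct (f a) eqn:Ef; destruct (g a) eqn:Eg; simpl; try lia.
  rewrite (H a (or_introl eq_refl) Ef) in Eg. discriminate.
Qed.

Ltac dec_all := repeat match goal with
  | |- context [Rle_dec ?a ?b] => destruct (Rle_dec a b)
  | H : context [Rle_dec ?a ?b] |- _ => destruct (Rle_dec a b) end.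

Lemma cnt_upper p q M :
  INR (length (filter (inI p q) (seq 0 M))) <= Rmax 0 (Rmin (INR M) (q + 1) - p).
Proof.
  induction M.
  - simpl. unfold Rmax. dec_all; lra.
  - rewrite seq_S, filter_app, length_app, plus_INR, S_INR. simpl (0 + M)%nat.
    set (c := INR (length (filter (inI p q) (seq 0 M)))) in *.
    simpl filter. destruct (inI p q M) eqn:E; unfold inI in E; simpl length; simpl INR;
    unfold Rmax, Rmin in *; dec_all; try discriminate; lra.
Qed.

Lemma cnt_lower p q M : 0 <= p ->
  Rmin (INR M) q - p - 1 <= INR (length (filter (inI p q) (seq 0 M))).
Proof.
  intros Hp. induction M.
  - simpl. unfold Rmin. dec_all; lra.
  - rewrite seq_S, filter_app, length_app, plus_INR, S_INR. simpl (0 + M)%nat.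
    pose proof (pos_INR (length (filter (inI p q) (seq 0 M)))).
    set (c := INR (length (filter (inI p q) (seq 0 M)))) in *.
    simpl filter. destruct (inI p q M) eqn:E; unfold inI in E; simpl length; simpl INR;
    unfold Rmin in *; dec_all; try discriminate; lra.
Qed.

Lemma positions (L eps n : R) (N : nat) (x : nat -> R) : 0 < n -> 0 <= eps -> x 0%nat = 0 ->
  (forall k, (1 <= k <= N)%nat -> Rabs (gap x k - L / n) <= eps / n) ->
  forall i, (i <= N)%nat -> Rabs (x i + INR i * L / n) <= INR i * eps / n.
Proof.
  intros Hn He Hx0 Hg. induction i; intros Hi.
  - simpl. rewrite Hx0. replace (0 + 0 * L / n) with 0 by (field; lra).
    rewrite Rabs_R0. right; field; lra.
  - assert (Hgi := Hg (S i) ltac:(lia)). unfold gap in Hgi.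
    replace (S i - 1)%nat with i in Hgi by lia.
    rewrite S_INR.
    replace (x (S i) + (INR i + 1) * L / n) with ((x i + INR i * L / n) - (x i - x (S i) - L / n))
      by (field; lra).
    eapply Rle_trans. apply Rabs_triang. rewrite Rabs_Ropp.
    assert (IH := IHi ltac:(lia)).
    replace ((INR i + 1) * eps / n) with (INR i * eps / n + eps / n) by (field; lra). lra.
Qed.

Theorem theorem2 (L : R) (F : nat -> R) (x : nat -> nat -> R) :
  0 < L ->
  (forall N : nat, 0 < F N) ->
  Un_cv (fun N => F N / INR N) 0 ->
  (forall N : nat, (1 <= N)%nat -> fixed_point L (F N) N (x N)) ->
  (* max_{1<=k<=N} |delta_k - L/N| = o(1/N) *)
  (forall eps : R, 0 < eps -> exists N0 : nat, forall N : nat, (N0 <= N)%nat ->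
     forall k : nat, (1 <= k <= N)%nat ->
       INR N * Rabs (gap (x N) k - L / INR N) <= eps)
  /\
  (* hence the density is the constant 1/L on [-L,0] *)
  (forall a b : R, -L <= a -> a <= b -> b <= 0 ->
     Un_cv (fun N => INR (count_in N (x N) a b) / INR N) ((b - a) * (1 / L))).
Proof.
  intros HL HF Hcv Hfp.
  assert (P1 := part1 L F x HL HF Hcv Hfp).
  split; [exact P1|].
  intros a b Ha Hab Hb eta Heta.
  set (e := eta * L / 4).
  assert (He : 0 < e) by (unfold e; nra).
  destruct (P1 e He) as [N0 HN0].
  destruct (nat_above (2 / eta)) as [N2 HN2].
  exists (Nat.max (Nat.max N0 N2) 1). intros N HN.
  assert (Hn1 : 1 <= INR N) by (apply (le_INR 1); lia).
  assert (Hn2 : INR N2 <= INR N) by (apply le_INR; lia).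
  assert (Hfpn := Hfp N ltac:(lia)).
  destruct Hfpn as [_ [Hx0 _]].
  set (n := INR N) in *.
  assert (Hinv : 1 / n < eta / 2).
  { apply Rmult_lt_reg_r with (n * (2 / eta)). apply Rmult_lt_0_compat; [lra|].
    apply Rdiv_lt_0_compat; lra.
    replace (1 / n * (n * (2 / eta))) with (2 / eta) by (field; lra).
    replace (eta / 2 * (n * (2 / eta))) with n by (field; lra). lra. }
  assert (Hg : forall k, (1 <= k <= N)%nat -> Rabs (gap (x N) k - L / n) <= e / n).
  { intros k Hk. assert (H := HN0 N ltac:(lia) k Hk). fold n in H.
    apply Rmult_le_reg_l with n. lra. replace (n * (e / n)) with e by (field; lra). exact H. }
  assert (Hpos : forall i, (i <= N)%nat -> Rabs (x N i + INR i * L / n) <= e).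
  { intros i Hi. eapply Rle_trans. apply (positions L e n N (x N)); auto; lra.
    assert (INR i <= n) by (apply le_INR; auto).
    apply Rmult_le_reg_r with n. lra. replace (INR i * e / n * n) with (INR i * e) by (field; lra).
    nra. }
  set (C := INR (count_in N (x N) a b)).
  assert (HnL : 0 < n / L) by (apply Rdiv_lt_0_compat; lra).
  assert (Hup : C <= n * (b - a + 2 * e) / L + 1).
  { set (p1 := (- b - e) * (n / L)). set (q1 := (- a + e) * (n / L)).
    assert (Hle : (length (filter (fun i => if Rle_dec a (x N i) then
                             (if Rle_dec (x N i) b then true else false)
                           else false) (seq 0 (N + 1))) <=
                  length (filter (inI p1 q1) (seq 0 (N + 1))))%nat).
    { apply filter_len_mono. intros i Hi Hf. apply in_seq in Hi.
      assert (Hp := Hpos i ltac:(lia)).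
      assert (Hy : INR i = (INR i * L / n) * (n / L)) by (field; lra).
      set (y := INR i * L / n) in *.
      assert (Hyb : -b - e <= y /\ y <= -a + e).
      { destruct (Rle_dec a (x N i)); destruct (Rle_dec (x N i) b); try discriminate.
        unfold Rabs in Hp; destruct Rcase_abs in Hp; lra. }
      unfold inI. destruct (Rle_dec p1 (INR i)) as [|Hc]; [destruct (Rle_dec (INR i) q1) as [|Hc]|];
      auto; exfalso; apply Hc; rewrite Hy; unfold p1, q1; apply Rmult_le_compat_r; lra. }
    apply le_INR in Hle.
    pose proof (cnt_upper p1 q1 (N + 1)).
    unfold C, count_in.
    assert (Hq : p1 <= q1) by (unfold p1, q1; apply Rmult_le_compat_r; lra).
    replace (n * (b - a + 2 * e) / L + 1) with (q1 + 1 - p1) by (unfold p1, q1; field; lra).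
    unfold Rmax, Rmin in *; dec_all; lra. }
  assert (Hlo : n * (b - a - 2 * e) / L - 1 <= C).
  { set (p2 := (- b + e) * (n / L)). set (q2 := (- a - e) * (n / L)).
    assert (Hle : (length (filter (inI p2 q2) (seq 0 (N + 1))) <=
                   length (filter (fun i => if Rle_dec a (x N i) then
                             (if Rle_dec (x N i) b then true else false)
                           else false) (seq 0 (N + 1))))%nat).
    { apply filter_len_mono. intros i Hi Hf. apply in_seq in Hi.
      assert (Hp := Hpos i ltac:(lia)).
      assert (Hy : INR i = (INR i * L / n) * (n / L)) by (field; lra).
      set (y := INR i * L / n) in *.
      assert (Hyb : -b + e <= y /\ y <= -a - e).
      { unfold inI in Hf. destruct (Rle_dec p2 (INR i)) as [H1|]; [destruct (Rle_dec (INR i) q2) as [H2|]|];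
        try discriminate. rewrite Hy in H1, H2. unfold p2 in H1; unfold q2 in H2.
        apply Rmult_le_reg_r in H1; [|lra]. apply Rmult_le_reg_r in H2; [|lra]. lra. }
      destruct (Rle_dec a (x N i)) as [|Hc]; [destruct (Rle_dec (x N i) b) as [|Hc]|]; auto;
      exfalso; apply Hc; unfold Rabs in Hp; destruct Rcase_abs in Hp; lra. }
    apply le_INR in Hle.
    assert (Hp2 : 0 <= p2) by (unfold p2; apply Rmult_le_pos; lra).
    pose proof (cnt_lower p2 q2 (N + 1) Hp2).
    unfold C, count_in.
    assert (Hq : q2 <= INR (N + 1)).
    { rewrite plus_INR. simpl (INR 1). fold n.
      apply Rle_trans with (L * (n / L)). unfold q2. apply Rmult_le_compat_r; lra.
      replace (L * (n / L)) with n by (field; lra). lra. }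
    replace (n * (b - a - 2 * e) / L - 1) with (q2 - p2 - 1) by (unfold p2, q2; field; lra).
    unfold Rmin in *; dec_all; lra. }
  unfold R_dist. fold C. fold n.
  replace (C / n - (b - a) * (1 / L)) with ((C - n * (b - a) / L) * (1 / n)) by (field; lra).
  rewrite Rabs_mult, (Rabs_pos_eq (1 / n)) by (apply Rlt_le, Rdiv_lt_0_compat; lra).
  assert (Hd : Rabs (C - n * (b - a) / L) <= n * (eta / 2) + 1).
  { replace (n * (eta / 2)) with (n * (2 * e) / L) by (unfold e; field; lra).
    assert (n * (b - a + 2 * e) / L = n * (b - a) / L + n * (2 * e) / L) by (field; lra).
    assert (n * (b - a - 2 * e) / L = n * (b - a) / L - n * (2 * e) / L) by (field; lra).
    unfold Rabs; destruct Rcase_abs; lra. }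
  apply Rle_lt_trans with ((n * (eta / 2) + 1) * (1 / n)).
  apply Rmult_le_compat_r. apply Rlt_le, Rdiv_lt_0_compat; lra. exact Hd.
  replace ((n * (eta / 2) + 1) * (1 / n)) with (eta / 2 + 1 / n) by (field; lra). lra.
Qed.
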